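(* Let $S$ be a nonempty set linearly ordered by $<$, made into a commutative semigroup by $m\cdot n=\max\{m,n\}$, equipped with the discrete topology, and having an identity $e$ (necessarily the least element of $S$). For each $n\in S\setminus\{e\}$ let $q_n=\sum_{j\in Q_n}q_n(j)\delta_j$ be a probability measure on $S$ with finite support $Q_n$ containing $e$, where $q_n(j)>0$ for $j\in Q_n$ and $\sum_{j\in Q_n}q_n(j)=1$. Define $*$ on point masses by $\delta_m*\delta_n=\delta_n*\delta_m=\delta_{\max\{m,n\}}$ if $m\neq n$ or $m=n=e$, and $\delta_n*\delta_n=q_n$ for $n\in S\setminus\{e\}$, extended bilinearly. For $n\in S$ put $\mathcal{L}_n=\{k\in S:k<n\}$. Then $(S,* )$ is a hermitian discrete hypergroup if and only if the following hold: (i) either $S$ is finite or $(S,<,\cdot)$ is isomorphic to $(\mathbb{Z}_+,<,\max)$; (ii) for every $n\in S\setminus\{e\}$, $\mathcal{L}_n\subset Q_n\subset\mathcal{L}_n\cup\{n\}$; (iii) if $\#S>2$, then for all $e\neq m<n$ in $S$: (a) $q_n(e)=q_n(m)\,q_m(e)$, and (b) $q_n(e)\bigl(1+\sum_{e\neq k\in\mathcal{L}_n}\frac{1}{q_k(e)}\bigr)\le 1$. Moreover, with $v_e=1$ and $v_n=1/q_n(e)$ for $n\in S\setminus\{e\}$, condition (iii) is equivalent to: (iii)$'$ if $\#S>2$, then for all $e\neq m<n$ in $S$, (a) $q_n(m)=v_m/v_n$ and (b) $\sum_{k\in\mathcal{L}_n}v_k\le v_n$.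
   Context: $\mathbb{Z}_+=\{0,1,2,\dots\}$. For a measure $\mu$ on a discrete set, $\mu(j)$ denotes $\mu(\{j\})$. A hermitian discrete hypergroup is a discrete set $K$ with a map $*$ from $K\times K$ to finitely supported probability measures on $K$ (extended bilinearly to measures), such that: $(\delta_m*\delta_n)*\delta_k=\delta_m*(\delta_n*\delta_k)$ for all $m,n,k$; there is $e\in K$ with $\delta_m*\delta_e=\delta_e*\delta_m=\delta_m$ for all $m$; $\delta_m*\delta_n=\delta_n*\delta_m$ for all $m,n$ (the involution being the identity map); and $e\in\operatorname{spt}(\delta_m*\delta_n)$ if and only if $m=n$. *)

(* Defs.v *)
From HB Require Import structures.
From mathcomp Require Import all_boot all_order all_algebra.
From mathcomp Require Import all_classical all_reals.
Set Implicit Arguments. Unset Strict Implicit. Unset Printing Implicit Defensive.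
Import Order.TTheory GRing.Theory Num.Theory.
Local Open Scope classical_set_scope.
Local Open Scope ring_scope.

Section Defs.
Variable R : realType.

Definition dirac (K : eqType) (a : K) : K -> R := fun j => if j == a then 1 else 0.

Definition fprob (K : choiceType) (mu : K -> R) : Prop :=
  [/\ forall j, 0 <= mu j,
      finite_set [set j | mu j != 0] &
      \sum_(j \in [set: K]) mu j = 1].

(* conv m n = delta_m * delta_n (a measure on K, given by its point masses).
   Bilinear extension: (mu * delta_k)(j) = sum_i mu(i) (delta_i * delta_k)(j). *)
Definition hermitian_discrete_hypergroup (K : choiceType) (conv : K -> K -> K -> R) : Prop :=
  [/\ (forall m n, fprob (conv m n)),
      (* (delta_m * delta_n) * delta_k = delta_m * (delta_n * delta_k) *)
      (forall m n k j,
         \sum_(i \in [set: K]) conv m n i * conv i k j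
         = \sum_(i \in [set: K]) conv n k i * conv m i j),
      (exists e : K,
         (forall m, conv m e = dirac m /\ conv e m = dirac m) /\
         (forall m n, conv m n e != 0 <-> m = n)) &
      (forall m n, conv m n = conv n m)].

Variables (d : Order.disp_t) (S : orderType d) (e : S) (q : S -> S -> R).

Definition maxconv (m n : S) : S -> R :=
  if (m != n) || (m == e) then dirac (Order.max m n) else q n.

Definition Lset (n : S) : set S := [set k | (k < n)%O].

Definition Qset (n : S) : set S := [set j | q n j != 0].

Definition card_gt2 : Prop :=
  exists a b c : S, [/\ a != b, a != c & b != c].

Definition cond_i : Prop :=
  finite_set [set: S] \/
  exists f : S -> nat, [/\ bijective f,
    (forall x y, (x < y)%O = (f x < f y)%N) &
    (forall x y, f (Order.max x y) = maxn (f x) (f y))].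

Definition cond_ii : Prop :=
  forall n, n != e -> Lset n `<=` Qset n /\ Qset n `<=` Lset n `|` [set n].

Definition cond_iii : Prop :=
  card_gt2 -> forall m n : S, m != e -> (m < n)%O ->
    q n e = q n m * q m e /\
    q n e * (1 + \sum_(k \in [set k | (k < n)%O /\ k != e]) (q k e)^-1) <= 1.

Definition vv (n : S) : R := if n == e then 1 else (q n e)^-1.

Definition cond_iii' : Prop :=
  card_gt2 -> forall m n : S, m != e -> (m < n)%O ->
    q n m = vv m / vv n /\
    \sum_(k \in Lset n) vv k <= vv n.

End Defs.

(* Main.v *)
Require Import Defs.
From HB Require Import structures.
From mathcomp Require Import all_boot all_order all_algebra.
From mathcomp Require Import all_classical all_reals.
Set Implicit Arguments. Unset Strict Implicit. Unset Printing Implicit Defensive.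
Import Order.TTheory GRing.Theory Num.Theory.
Local Open Scope classical_set_scope.
Local Open Scope ring_scope.

Lemma sum_dirac_l (R : realType) (T : choiceType) (x : T) (f : T -> R) :
  \sum_(i \in [set: T]) dirac R x i * f i = f x.
Proof.
rewrite -(fsbig_widen [set x]) //; first by rewrite fsbig_set1 /dirac eqxx mul1r.
move=> i [_ /= nx]; rewrite /dirac ifF ?mul0r //; exact/eqP.
Qed.

Lemma sum_dirac_r (R : realType) (T : choiceType) (x : T) (f : T -> R) :
  \sum_(i \in [set: T]) f i * dirac R i x = f x.
Proof.
rewrite -(sum_dirac_l x f); apply: eq_fsbigr => i _.
by rewrite mulrC /dirac eq_sym.
Qed.

Lemma fsum_sub_le (R : realType) (T : choiceType) (A : set T) (f : T -> R) :
  (forall i, 0 <= f i) -> finite_set [set j | f j != 0] ->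
  \sum_(i \in A) f i <= \sum_(i \in [set: T]) f i.
Proof.
move=> f0 ffin.
have G : finite_set (f @^-1` [set~ 0]).
  by apply: sub_finite_set ffin => x /= /eqP.
rewrite fsbig_supp [X in _ <= X]fsbig_supp setTI.
rewrite [X in _ <= X](fsbigID A) // setIC lerDl.
by apply: fsumr_ge0 => i _.
Qed.

Lemma pt_le_sum (R : realType) (T : choiceType) (x : T) (f : T -> R) :
  (forall i, 0 <= f i) -> finite_set [set j | f j != 0] ->
  f x <= \sum_(i \in [set: T]) f i.
Proof.
move=> f0 ffin.
have -> : f x = \sum_(i \in [set x]) f i by rewrite fsbig_set1.
exact: fsum_sub_le.
Qed.

Lemma c_neq (R : realType) d (S : orderType d) (e : S) (q : S -> S -> R) m n j :
  m != n -> maxconv e q m n j = dirac R (Order.max m n) j.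
Proof. by move=> h; rewrite /maxconv h. Qed.

Lemma c_eq (R : realType) d (S : orderType d) (e : S) (q : S -> S -> R) n j :
  n != e -> maxconv e q n n j = q n j.
Proof. by move=> h; rewrite /maxconv eqxx /= (negbTE h). Qed.

Lemma c_e_r (R : realType) d (S : orderType d) (e : S) (q : S -> S -> R) m j :
  (forall x, (e <= x)%O) -> maxconv e q m e j = dirac R m j.
Proof.
move=> he; rewrite /maxconv; case: (eqVneq m e) => [->|h]; first by rewrite orbT maxxx.
by rewrite /= max_l.
Qed.

Lemma c_e_l (R : realType) d (S : orderType d) (e : S) (q : S -> S -> R) m j :
  (forall x, (e <= x)%O) -> maxconv e q e m j = dirac R m j.
Proof.
move=> he; rewrite /maxconv.
have -> : (e != m) || (e == e) by rewrite eqxx orbT.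
by rewrite max_r.
Qed.

Lemma c_comm (R : realType) d (S : orderType d) (e : S) (q : S -> S -> R) m n j :
  maxconv e q m n j = maxconv e q n m j.
Proof.
rewrite /maxconv; case: (eqVneq m n) => [->//|h].
by rewrite /= maxC.
Qed.

Lemma dirac0 (R : realType) (K : eqType) (a j : K) : a != j -> dirac R a j = 0.
Proof. by move=> h; rewrite /dirac eq_sym (negbTE h). Qed.

Lemma conv_dir (R : realType) d (S : orderType d) (e : S) (q : S -> S -> R)
  (mu : S -> R) x k j : (forall i, mu i = dirac R x i) ->
  \sum_(i \in [set: S]) mu i * maxconv e q i k j = maxconv e q x k j.
Proof.
move=> h; rewrite -(sum_dirac_l x (fun i => maxconv e q i k j)).
by apply: eq_fsbigr => i _; rewrite h.
Qed.

Lemma dirac_sym (R : realType) (K : eqType) (a j : K) : dirac R a j = dirac R j a.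
Proof. by rewrite /dirac eq_sym. Qed.

Lemma derivD (R : realType) d (S : orderType d) (e : S) (q : S -> S -> R)
  (hq_e : forall n : S, n != e -> 0 < q n e)
  (ha : forall m n, m != e -> (m < n)%O -> q n e = q n m * q m e)
  m n i : m != e -> (m < n)%O -> (i < m)%O -> q n i = q n m * q m i.
Proof.
move=> me mn im; case: (eqVneq i e) => [->|ie]; first exact: ha.
have h1 := ha i n ie (lt_trans im mn); have h2 := ha i m ie im.
have h3 := ha m n me mn.
apply: (mulIf (lt0r_neq0 (hq_e _ ie))).
by rewrite -h1 -mulrA -h2 h3.
Qed.

Lemma L4 (R : realType) d (S : orderType d) (e : S) (q : S -> S -> R)
  (he : forall x : S, (e <= x)%O)
  (hq_e : forall n : S, n != e -> 0 < q n e)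
  (hq_fin : forall n : S, n != e -> finite_set [set j | q n j != 0])
  (hq_sum : forall n : S, n != e -> \sum_(j \in [set: S]) q n j = 1)
  (hsupp : forall n j, n != e -> (n < j)%O -> q n j = 0)
  (ha : forall m n, m != e -> (m < n)%O -> q n e = q n m * q m e)
  m n j : m != e -> (m < n)%O ->
  \sum_(i \in [set: S]) q n i * maxconv e q i m j = q n j.
Proof.
move=> me mn.
have ne : n != e by rewrite gt_eqF // (le_lt_trans (he m) mn).
have D := derivD hq_e ha.
case: (ltgtP j m) => [jm|mj|->].
- rewrite -[RHS](sum_dirac_l m (fun _ => q n j)); apply: eq_fsbigr => i _.
  case: (eqVneq i m) => [->|im].
    by rewrite c_eq // /dirac eqxx mul1r -D.
  rewrite c_neq // dirac0 ?mulr0; last first.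
    by rewrite gt_eqF // (lt_le_trans jm) // le_max lexx orbT.
  by rewrite dirac0 ?mul0r // eq_sym.
- rewrite -[RHS](sum_dirac_l j (fun i => q n i)); apply: eq_fsbigr => i _.
  case: (eqVneq i m) => [->|im].
    by rewrite c_eq // (hsupp m j) // mulr0 dirac0 ?mul0r // gt_eqF.
  rewrite c_neq //; case: (ltgtP i m) => [lim|lmi|eim]; last by rewrite eim eqxx in im.
  + rewrite dirac0 ?mulr0; last by rewrite lt_eqF.
    by rewrite dirac0 ?mul0r // gt_eqF // (lt_trans lim).
  + by rewrite mulrC dirac_sym.
- transitivity (q n m * \sum_(i \in [set: S]) q m i); last by rewrite hq_sum // mulr1.
  rewrite mulr_fsumr; apply: eq_fsbigr => i _.
  case: (ltgtP i m) => [lim|lmi|->]; last by rewrite c_eq.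
  + by rewrite c_neq ?lt_eqF // max_r ?ltW // /dirac eqxx mulr1 -D.
  + rewrite c_neq ?gt_eqF // max_l ?ltW // dirac0 ?gt_eqF // ?mulr0.
    by rewrite (hsupp m i) // mulr0.
Qed.

Lemma L6 (R : realType) d (S : orderType d) (e : S) (q : S -> S -> R)
  (hq_sum : forall n : S, n != e -> \sum_(j \in [set: S]) q n j = 1)
  (hsupp : forall n j, n != e -> (n < j)%O -> q n j = 0)
  n k j : n != e -> (n < k)%O ->
  \sum_(i \in [set: S]) q n i * maxconv e q i k j = dirac R k j.
Proof.
move=> ne nk.
transitivity (dirac R k j * \sum_(i \in [set: S]) q n i); last by rewrite hq_sum // mulr1.
rewrite mulr_fsumr; apply: eq_fsbigr => i _.
case: (ltP i k) => [ik|ki].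
  by rewrite c_neq ?lt_eqF // max_r ?ltW // mulrC.
by rewrite hsupp ?mul0r ?mulr0 // (lt_le_trans nk).
Qed.

Lemma conv_neq (R : realType) d (S : orderType d) (e : S) (q : S -> S -> R) a b k j :
  a != b ->
  \sum_(i \in [set: S]) maxconv e q a b i * maxconv e q i k j
  = maxconv e q (Order.max a b) k j.
Proof. by move=> h; apply: conv_dir => i; rewrite c_neq. Qed.

Lemma max_neq d (S : orderType d) (m n k : S) : m != k -> n != k -> Order.max m n != k.
Proof. by move=> h1 h2; case: leP. Qed.

Lemma assoc_max (R : realType) d (S : orderType d) (e : S) (q : S -> S -> R)
  (he : forall x : S, (e <= x)%O)
  (hq_e : forall n : S, n != e -> 0 < q n e)
  (hq_fin : forall n : S, n != e -> finite_set [set j | q n j != 0])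
  (hq_sum : forall n : S, n != e -> \sum_(j \in [set: S]) q n j = 1)
  (hsupp : forall n j, n != e -> (n < j)%O -> q n j = 0)
  (ha : forall m n, m != e -> (m < n)%O -> q n e = q n m * q m e)
  m n k j :
  \sum_(i \in [set: S]) maxconv e q m n i * maxconv e q i k j
  = \sum_(i \in [set: S]) maxconv e q n k i * maxconv e q m i j.
Proof.
rewrite [RHS](eq_fsbigr (fun i => maxconv e q n k i * maxconv e q i m j)); last first.
  by move=> i _; rewrite [maxconv e q m i j]c_comm.
case: (eqVneq m e) => [->|me].
  rewrite (conv_dir e q _ _ (fun i => c_e_l q n i he)).
  rewrite [RHS](eq_fsbigr (fun i => maxconv e q n k i * dirac R i j)).
    by rewrite sum_dirac_r.
  by move=> i _; rewrite c_e_r.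
case: (eqVneq n e) => [->|ne].
  rewrite (conv_dir e q _ _ (fun i => c_e_r q m i he)).
  by rewrite (conv_dir e q _ _ (fun i => c_e_l q k i he)) c_comm.
case: (eqVneq k e) => [->|ke].
  rewrite [LHS](eq_fsbigr (fun i => maxconv e q m n i * dirac R i j)).
    by rewrite sum_dirac_r (conv_dir e q _ _ (fun i => c_e_r q n i he)) c_comm.
  by move=> i _; rewrite c_e_r.
case: (eqVneq m n) => [<-|mn].
  case: (eqVneq m k) => [<-//|mk].
  rewrite [RHS]conv_neq // [LHS](eq_fsbigr (fun i => q m i * maxconv e q i k j)); last first.
    by move=> i _; rewrite c_eq.
  case: (ltgtP m k) => [lmk|lkm|emk]; last by rewrite emk eqxx in mk.
  - by rewrite L6 // c_neq ?gt_eqF // max_l // ltW.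
  - by rewrite (L4 he hq_e hq_fin hq_sum hsupp ha) // c_eq.
case: (eqVneq n k) => [<-|nk].
  rewrite [LHS]conv_neq // [RHS](eq_fsbigr (fun i => q n i * maxconv e q i m j)); last first.
    by move=> i _; rewrite c_eq.
  case: (ltgtP m n) => [lmn|lnm|emn]; last by rewrite emn eqxx in mn.
  - by rewrite (L4 he hq_e hq_fin hq_sum hsupp ha) // c_eq.
  - by rewrite L6 // c_neq ?gt_eqF // max_l // ltW.
rewrite !conv_neq //.
case: (eqVneq m k) => [<-|mk]; first by rewrite maxC.
rewrite !c_neq ?max_neq // 1?eq_sym //.
by rewrite [in RHS]maxC maxA.
Qed.

Lemma fprob_dirac (R : realType) (K : choiceType) (x : K) : fprob (dirac R x).
Proof.
split.
- by move=> j; rewrite /dirac; case: ifP.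
- apply: sub_finite_set (finite_set1 x) => j /=; rewrite /dirac.
  by case: (eqVneq j x) => // _; rewrite /= eqxx.
- have := sum_dirac_l (R:=R) x (fun _ => 1).
  by under eq_fsbigr do rewrite mulr1.
Qed.

Lemma hsupp_of_ii (R : realType) d (S : orderType d) (e : S) (q : S -> S -> R) :
  cond_ii e q -> forall n j, n != e -> (n < j)%O -> q n j = 0.
Proof.
move=> hii n j ne nj; apply/eqP; apply: contraT => hj.
have [_ H2] := hii n ne.
case: (H2 j hj) => [/= jn|/= jn].
  by move: (lt_trans nj jn); rewrite ltxx.
by move: nj; rewrite jn ltxx.
Qed.

Lemma ha_of_iii (R : realType) d (S : orderType d) (e : S) (q : S -> S -> R)
  (he : forall x : S, (e <= x)%O) :
  cond_iii e q -> forall m n, m != e -> (m < n)%O -> q n e = q n m * q m e.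
Proof.
move=> hiii m n me mn.
have ne : n != e by rewrite gt_eqF // (le_lt_trans (he m) mn).
have [] // := hiii _ m n me mn.
exists e, m, n; split; rewrite 1?eq_sym //.
by rewrite gt_eqF.
Qed.

Lemma hyper_of_cond (R : realType) d (S : orderType d) (e : S) (q : S -> S -> R)
  (he : forall x : S, (e <= x)%O)
  (hq_ge0 : forall n j : S, n != e -> 0 <= q n j)
  (hq_fin : forall n : S, n != e -> finite_set [set j | q n j != 0])
  (hq_e : forall n : S, n != e -> 0 < q n e)
  (hq_sum : forall n : S, n != e -> \sum_(j \in [set: S]) q n j = 1) :
  cond_ii e q -> cond_iii e q -> hermitian_discrete_hypergroup (maxconv e q).
Proof.
move=> hii hiii.
have hsupp := hsupp_of_ii hii.
have ha := ha_of_iii he hiii.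
split.
- move=> m n; rewrite /maxconv; case: ifP => [_|/negbT]; first exact: fprob_dirac.
  rewrite negb_or negbK => /andP[/eqP -> ne].
  by split; [move=> j; exact: (hq_ge0 n j ne) | exact: hq_fin | exact: hq_sum].
- exact: assoc_max.
- exists e; split.
    by move=> m; split; apply/funext => j; [exact: c_e_r | exact: c_e_l].
  move=> m n; case: (eqVneq m n) => [<-|mn].
    split=> // _; case: (eqVneq m e) => [->|me].
      by rewrite c_e_r // /dirac eqxx oner_neq0.
    by rewrite c_eq // lt0r_neq0 // hq_e.
  split=> [|/eqP]; last by rewrite (negbTE mn).
  rewrite c_neq // dirac0 ?eqxx //.
  have : (e < Order.max m n)%O.
    rewrite lt_max !lt_neqAle !he !andbT; case: (eqVneq m e) => [mE|//].
    by rewrite /= -mE.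
  by rewrite lt_neqAle eq_sym => /andP[].
- by move=> m n; apply/funext => j; exact: c_comm.
Qed.

Lemma Lset_e d (S : orderType d) (e : S) (he : forall x : S, (e <= x)%O) :
  Lset e = set0.
Proof.
apply/seteqP; split => k //= ke.
by have := lt_le_trans ke (he k); rewrite ltxx.
Qed.

Lemma cond_i_of_fin d (S : orderType d) (e : S) (he : forall x : S, (e <= x)%O)
  (Lfin : forall x : S, finite_set (Lset x)) : cond_i S.
Proof.
case: (pselect (finite_set [set: S])) => Sfin; [by left | right].
pose f (x : S) := size (finmap.enum_fset (fset_set (Lset x))).
have mono : forall x y : S, (x < y)%O -> (f x < f y)%N.
  move=> x y xy; apply: finmap.fproper_ltn_card; rewrite finmap.fproperE.
  apply/andP; split.
    by rewrite -fset_set_sub // => k /= kx; apply: lt_trans kx xy.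
  apply/negP; rewrite -fset_set_sub // => /(_ x xy) /=.
  by move=> h; move: h; rewrite /Lset /= ltxx.
have mono2 : forall x y : S, (x < y)%O = (f x < f y)%N.
  move=> x y; case: (ltgtP x y) => [xy|yx|->].
  - by rewrite mono.
  - by apply/esym/negbTE; rewrite -leqNgt ltnW // mono.
  - by rewrite ltnn.
have inj : injective f.
  move=> x y fxy; case: (ltgtP x y) => [xy|yx|//].
  - by have := mono _ _ xy; rewrite fxy ltnn.
  - by have := mono _ _ yx; rewrite fxy ltnn.
have surj : forall N, exists x, f x = N.
  elim=> [|N [x fx]].
    exists e; rewrite /f Lset_e // fset_set0.
    by rewrite finmap.cardfs0.
  have [y0 xy0] : exists y, (x < y)%O.
    case: (pselect (exists y, (x < y)%O)) => // nex; exfalso; apply: Sfin.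
    apply: (sub_finite_set (B := [set x] `|` Lset x)).
      move=> y _; case: (ltgtP y x) => [yx|xy|->]; [by right|exfalso|by left].
      by apply: nex; exists y.
    by rewrite finite_setU; split; [exact: finite_set1 | exact: Lfin].
  have claim : forall M y, (f y < M)%N -> (x < y)%O ->
      exists z, (x < z)%O /\ forall w, (w < z)%O = (w <= x)%O.
    elim=> [//|M IH] y fyM xy.
    case: (pselect (exists w, (x < w)%O /\ (w < y)%O)) => [[w [xw wy]]|nex].
      apply: (IH w) => //; have := mono _ _ wy; move: fyM; rewrite ltnS.
      by move=> h1 h2; apply: leq_trans h2 h1.
    exists y; split => // w; apply/idP/idP => [wy|wx].
      by rewrite leNgt; apply/negP => xw; apply: nex; exists w.
    exact: le_lt_trans wx xy.
  have [z [xz hz]] := claim (f y0).+1 y0 (ltnSn _) xy0.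
  exists z; rewrite /f; rewrite /f in fx.
  have -> : Lset z = [set x] `|` Lset x.
    apply/seteqP; split => w /=; rewrite /Lset /= hz le_eqVlt.
      by case/orP=> [/eqP ->|h]; [left | right].
    by case=> [->|->]; rewrite ?eqxx ?orbT.
  rewrite fset_setU ?finite_set1 //.
  rewrite fset_set1 finmap.cardfsU1 fx.
  rewrite in_fset_set // memNset ?add1n //.
  by rewrite /Lset /= ltxx.
pose g (N : nat) := proj1_sig (cid (surj N)).
have fg : forall N, f (g N) = N by move=> N; rewrite /g; case: cid.
exists f; split => //.
- by exists g => [x|N]; [apply: inj; rewrite fg | exact: fg].
- move=> x y; case: (leP x y) => h.
    apply/esym/maxn_idPr; move: h; rewrite le_eqVlt => /orP[/eqP ->//|/mono/ltnW//].
  by apply/esym/maxn_idPl; apply/ltnW/mono.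
Qed.

Lemma G_lem (R : realType) d (S : orderType d) (e : S) (q : S -> S -> R)
  (he : forall x : S, (e <= x)%O)
  (Hassoc : forall m n k j,
     \sum_(i \in [set: S]) maxconv e q m n i * maxconv e q i k j
     = \sum_(i \in [set: S]) maxconv e q n k i * maxconv e q m i j)
  n k : n != e -> k != e -> n != k ->
  q n k * q k e = maxconv e q n (Order.max n k) e.
Proof.
move=> ne ke nk.
have ek : (e < k)%O by rewrite lt_neqAle eq_sym ke he.
rewrite [RHS]c_comm.
have := Hassoc n n k e.
rewrite [LHS](eq_fsbigr (fun i => q n i * maxconv e q i k e)); last first.
  by move=> i _; rewrite c_eq.
rewrite [RHS](eq_fsbigr (fun i => maxconv e q n k i * maxconv e q i n e)); last first.
  by move=> i _; rewrite [maxconv e q n i e]c_comm.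
rewrite [RHS]conv_neq // => <-.
rewrite -[LHS](sum_dirac_l k (fun _ => q n k * q k e)); apply: eq_fsbigr => i _.
case: (eqVneq i k) => [->|ik]; first by rewrite c_eq // /dirac eqxx mul1r.
rewrite dirac0 1?eq_sym // mul0r c_neq // dirac0 ?mulr0 //.
by rewrite gt_eqF // (lt_le_trans ek) // le_max lexx orbT.
Qed.

Lemma cond_of_hyper (R : realType) d (S : orderType d) (e : S) (q : S -> S -> R)
  (he : forall x : S, (e <= x)%O)
  (hq_ge0 : forall n j : S, n != e -> 0 <= q n j)
  (hq_fin : forall n : S, n != e -> finite_set [set j | q n j != 0])
  (hq_e : forall n : S, n != e -> 0 < q n e)
  (hq_sum : forall n : S, n != e -> \sum_(j \in [set: S]) q n j = 1) :
  hermitian_discrete_hypergroup (maxconv e q) ->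
  [/\ cond_i S, cond_ii e q & cond_iii e q].
Proof.
case=> _ Hassoc _ _.
have G := G_lem he Hassoc.
have Glt : forall k n, k != e -> (k < n)%O -> q n e = q n k * q k e.
  move=> k n ke kn.
  have ne : n != e by rewrite gt_eqF // (le_lt_trans (he k) kn).
  by rewrite G // ?gt_eqF // max_l ?ltW // c_eq.
have Ggt : forall n k, n != e -> (n < k)%O -> q n k = 0.
  move=> n k ne nk.
  have ke : k != e by rewrite gt_eqF // (le_lt_trans (he n) nk).
  have := G n k ne ke (negbT (lt_eqF nk)).
  rewrite max_r ?ltW // c_neq ?lt_eqF // max_r ?ltW // dirac0 //.
  by move/eqP; rewrite mulf_eq0 (negbTE (lt0r_neq0 (hq_e k ke))) orbF => /eqP.
have hii : cond_ii e q.
  move=> n ne; split => k /=.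
    move=> kn; rewrite /Qset /=; case: (eqVneq k e) => [->|ke].
      exact: lt0r_neq0 (hq_e n ne).
    apply/negP => /eqP qk; move: (hq_e n ne); rewrite (Glt k n ke kn) qk mul0r.
    by rewrite ltxx.
  rewrite /Qset /= => qk; case: (ltgtP k n) => [kn|nk|->]; [by left| |by right].
  by move: qk; rewrite Ggt // eqxx.
have Lfin : forall x : S, finite_set (Lset x).
  move=> x; case: (eqVneq x e) => [->|xe]; first by rewrite Lset_e.
  apply: sub_finite_set (hq_fin x xe); exact: (proj1 (hii x xe)).
split => //; first exact: cond_i_of_fin he Lfin.
move=> _ m n me mn.
have ne : n != e by rewrite gt_eqF // (le_lt_trans (he m) mn).
have en : (e < n)%O by rewrite lt_neqAle eq_sym ne he.
split; first exact: Glt.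
rewrite mulrDr mulr1 mulr_fsumr.
rewrite (eq_fsbigr (fun k => q n k)); last first.
  move=> k /set_mem [kn ke] /=.
  by rewrite (Glt k n ke kn) mulfK // lt0r_neq0 // hq_e.
have -> : [set k | (k < n)%O /\ k != e] = Lset n `\ e.
  apply/seteqP; split => x /= [h1 h2]; split => //; first by apply/eqP.
  by apply/eqP.
rewrite -fsbigD1 //.
apply: le_trans (fsum_sub_le _ _ _) _ => //.
  by move=> j; exact: hq_ge0.
  exact: hq_fin.
by rewrite hq_sum.
Qed.

Lemma iii_pt (R : realType) d (S : orderType d) (e : S) (q : S -> S -> R)
  (he : forall x : S, (e <= x)%O)
  (hq_ge0 : forall n j : S, n != e -> 0 <= q n j)
  (hq_fin : forall n : S, n != e -> finite_set [set j | q n j != 0])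
  (hq_e : forall n : S, n != e -> 0 < q n e)
  (hq_sum : forall n : S, n != e -> \sum_(j \in [set: S]) q n j = 1)
  m n : m != e -> (m < n)%O ->
  (q n e = q n m * q m e <-> q n m = vv e q m / vv e q n) /\
  (q n e * (1 + \sum_(k \in [set k | (k < n)%O /\ k != e]) (q k e)^-1) <= 1 <->
   \sum_(k \in Lset n) vv e q k <= vv e q n).
Proof.
move=> me mn.
have ne : n != e by rewrite gt_eqF // (le_lt_trans (he m) mn).
have en : (e < n)%O by rewrite lt_neqAle eq_sym ne he.
have qme := hq_e m me; have qne := hq_e n ne.
have vvn : vv e q n = (q n e)^-1 by rewrite /vv (negbTE ne).
have vvm : vv e q m = (q m e)^-1 by rewrite /vv (negbTE me).
have vv0 : forall k, vv e q k != 0.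
  move=> k; rewrite /vv; case: (eqVneq k e) => [_|ke]; first exact: oner_neq0.
  by rewrite invr_neq0 // lt0r_neq0 // hq_e.
split.
  rewrite vvn vvm invrK; split => H.
    by rewrite H mulrC mulfK // lt0r_neq0.
  by rewrite H mulrAC mulVf ?mul1r // lt0r_neq0.
set A := [set k | (k < n)%O /\ k != e].
have AL : A = Lset n `\ e.
  apply/seteqP; split => x /= [h1 h2]; split => //; first by apply/eqP.
  by apply/eqP.
case: (pselect (finite_set (Lset n))) => Lf.
  rewrite [in X in _ <-> X](fsbigD1 e) // {1}/vv eqxx -/(vv e q) -AL.
  rewrite [in X in _ <-> X](eq_fsbigr (fun k => (q k e)^-1)); last first.
    by move=> k /set_mem [_ ke]; rewrite /vv (negbTE ke).
  by rewrite vvn -[(q n e)^-1]mulr1 ler_pdivlMl.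
have Af : infinite_set (A `&` (fun k => (q k e)^-1) @^-1` [set~ 0]).
  move=> Af; apply: Lf; apply: (sub_finite_set (B := [set e] `|` (A `&` (fun k => (q k e)^-1) @^-1` [set~ 0]))).
    move=> k /= kn; case: (eqVneq k e) => [->|ke]; [by left | right].
    split; first by split.
    by apply/eqP; rewrite invr_neq0 // lt0r_neq0 // hq_e.
  by rewrite finite_setU; split; [exact: finite_set1 | exact: Af].
have Lf' : infinite_set (Lset n `&` vv e q @^-1` [set~ 0]).
  move=> Lf'; apply: Lf; apply: sub_finite_set Lf' => k kn; split => //.
  exact/eqP.
rewrite (fsbig_dflt _ Af) (fsbig_dflt _ Lf') addr0 mulr1; split => _.
  by rewrite vvn invr_ge0 ltW.
rewrite -(hq_sum n ne); apply: pt_le_sum => [j|]; [exact: hq_ge0 | exact: hq_fin].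
Qed.

Lemma iii_iff (R : realType) d (S : orderType d) (e : S) (q : S -> S -> R)
  (he : forall x : S, (e <= x)%O)
  (hq_ge0 : forall n j : S, n != e -> 0 <= q n j)
  (hq_fin : forall n : S, n != e -> finite_set [set j | q n j != 0])
  (hq_e : forall n : S, n != e -> 0 < q n e)
  (hq_sum : forall n : S, n != e -> \sum_(j \in [set: S]) q n j = 1) :
  cond_iii e q <-> cond_iii' e q.
Proof.
split=> H c m n me mn; have [[a1 a2] [b1 b2]] := iii_pt he hq_ge0 hq_fin hq_e hq_sum me mn;
  have [h1 h2] := H c m n me mn; split; by [apply: a1 | apply: b1 | apply: a2 | apply: b2].
Qed.

Unset Implicit Arguments.

Theorem theorem3p2 (R : realType) (d : Order.disp_t) (S : orderType d)
  (e : S) (q : S -> S -> R)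
  (he : forall x : S, (e <= x)%O)
  (hq_ge0 : forall n j : S, n != e -> 0 <= q n j)
  (hq_fin : forall n : S, n != e -> finite_set [set j | q n j != 0])
  (hq_e : forall n : S, n != e -> 0 < q n e)
  (hq_sum : forall n : S, n != e -> \sum_(j \in [set: S]) q n j = 1) :
  (hermitian_discrete_hypergroup (maxconv e q) <->
     [/\ cond_i S, cond_ii e q & cond_iii e q]) /\
  (cond_iii e q <-> cond_iii' e q).
Proof.
split; last exact: iii_iff he hq_ge0 hq_fin hq_e hq_sum.
split; first exact: cond_of_hyper he hq_ge0 hq_fin hq_e hq_sum.
by case=> _ hii hiii; exact: hyper_of_cond he hq_ge0 hq_fin hq_e hq_sum hii hiii.
Qed.
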